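(* Let $(S,\mathcal F,\mathcal L)$ be a $p$-local finite group and let $A\le Z(S)$ be $\mathcal F$-weakly closed. Then $\mathrm{Foc}(\mathcal F)=\mathrm{Foc}(N_{\mathcal F}(A))$.
   Context: A subgroup of $S$ is $\mathcal F$-weakly closed if no other subgroup of $S$ is $\mathcal F$-conjugate to it. For $Q\le S$, the normalizer fusion system $N_{\mathcal F}(Q)$ is the fusion system over $N_S(Q)$ with $\mathrm{Hom}_{N_{\mathcal F}(Q)}(P,P')=\{\phi\in\mathrm{Hom}_{\mathcal F}(P,P')\mid \exists\psi\in\mathrm{Hom}_{\mathcal F}(PQ,P'Q),\ \psi|_P=\phi,\ \psi(Q)\le Q\}$. For a fusion system $\mathcal E$ over a $p$-group $T$, the focal subgroup is $\mathrm{Foc}(\mathcal E)=\langle g^{-1}\alpha(g)\mid g\in P\le T,\ \alpha\in\mathrm{Aut}_{\mathcal E}(P)\rangle$. Let $p$ be a prime and $S$ a finite $p$-group. For $P,Q\le S$, $\mathrm{Hom}_S(P,Q)$ is the set of maps $c_g\colon x\mapsto gxg^{-1}$ with $g\in S$, $gPg^{-1}\le Q$, and $\mathrm{Aut}_S(P)=\mathrm{Hom}_S(P,P)$. A fusion system $\mathcal F$ over $S$ is a category whose objects are the subgroups of $S$, with $\mathrm{Hom}_S(P,Q)\subseteq\mathrm{Hom}_{\mathcal F}(P,Q)\subseteq \mathrm{Inj}(P,Q)$, such that every morphism factors as an $\mathcal F$-isomorphism followed by an inclusion. Subgroups are $\mathcal F$-conjugate if they are isomorphic in $\mathcal F$.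 $P$ is fully centralized (resp. fully normalized) if $|C_S(P)|\ge |C_S(P')|$ (resp. $|N_S(P)|\ge|N_S(P')|$) for all $P'$ $\mathcal F$-conjugate to $P$. $\mathcal F$ is saturated if (I) every fully normalized $P$ is fully centralized and $\mathrm{Aut}_S(P)$ is a Sylow $p$-subgroup of $\mathrm{Aut}_{\mathcal F}(P)$, and (II) whenever $\phi\in\mathrm{Hom}_{\mathcal F}(P,S)$ with $\phi(P)$ fully centralized, $\phi$ extends to a morphism in $\mathcal F$ defined on $N_\phi=\{g\in N_S(P):\phi c_g\phi^{-1}\in \mathrm{Aut}_S(\phi(P))\}$. $P$ is $\mathcal F$-centric if $C_S(P')\le P'$ for all $P'$ $\mathcal F$-conjugate to $P$; $\mathcal F^c$ is the full subcategory on these. A centric linking system associated to $\mathcal F$ is a category $\mathcal L$ with objects the $\mathcal F$-centric subgroups, a functor $\pi\colon\mathcal L\to\mathcal F^c$ which is the identity on objects, and monomorphisms $\delta_P\colon P\to\mathrm{Aut}_{\mathcal L}(P)$, such that (A) $Z(P)$ (via $\delta_P$) acts freely on $\mathrm{Mor}_{\mathcal L}(P,Q)$ by composition and $\pi$ induces a bijection $\mathrm{Mor}_{\mathcal L}(P,Q)/Z(P)\to\mathrm{Hom}_{\mathcal F}(P,Q)$; (B) $\pi(\delta_P(g))=c_g$ for $g\in P$; (C) $f\circ\delta_P(g)=\delta_Q(\pi(f)(g))\circ f$ for $f\in\mathrm{Mor}_{\mathcal L}(P,Q)$, $g\in P$. A $p$-local finite group is a triple $(S,\mathcal F,\mathcal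 L)$ with $\mathcal F$ a saturated fusion system over $S$ and $\mathcal L$ an associated centric linking system. *)

(* Defs.v *)
From mathcomp Require Import all_boot all_fingroup all_solvable.
Set Implicit Arguments.
Unset Strict Implicit.
Unset Printing Implicit Defensive.
Import GroupScope.
Local Open Scope group_scope.

(* A (candidate) morphism P -> Q is encoded as a finite function
   f : {ffun gT -> gT} normalised to be 1 outside P.
   A fusion system over S is given by F : {set gT} -> {set gT} -> {set {ffun gT -> gT}},
   F P Q = Hom_F(P,Q) (only meaningful for subgroups P, Q of S).
   MathComp conjugation: x ^ y = y^-1 * x * y, so c_g(x) = g x g^-1 = x ^ g^-1. *)

Section Fusion.
Variable gT : finGroupType.
Implicit Types (S P Q R T : {set gT}) (f : {ffun gT -> gT}).

Definition hom_type := {set gT} -> {set gT} -> {set {ffun gT -> gT}}.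

Definition res P (h : gT -> gT) : {ffun gT -> gT} :=
  [ffun x => if x \in P then h x else 1].

Definition HomS S P Q : {set {ffun gT -> gT}} :=
  [set res P (fun x => x ^ g^-1) | g in S & P :^ g^-1 \subset Q].

Definition Inj P Q : {set {ffun gT -> gT}} :=
  [set f : {ffun gT -> gT} | [&& [forall x, (x \notin P) ==> (f x == 1)],
              [forall x in P, forall y in P, f (x * y) == f x * f y],
              [forall x in P, forall y in P, (f x == f y) ==> (x == y)] &
              f @: P \subset Q]].

Definition Fiso (F : hom_type) P Q f :=
  f \in F P Q /\
  exists2 g, g \in F Q P & {in P, forall x, g (f x) = x} /\ {in Q, forall y, f (g y) = y}.

Definition Fconj (F : hom_type) P Q := exists f, Fiso F P Q f.

Definition fusion_system S (F : hom_type) :=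
  [/\ (forall P Q : {group gT}, P \subset S -> Q \subset S ->
         HomS S P Q \subset F P Q /\ F P Q \subset Inj P Q),
      (forall P Q R : {group gT}, P \subset S -> Q \subset S -> R \subset S ->
         forall f g, f \in F P Q -> g \in F Q R -> res P (fun x => g (f x)) \in F P R) &
      (forall P Q : {group gT}, P \subset S -> Q \subset S ->
         forall f, f \in F P Q -> Fiso F P (f @: P) f)].

Definition fully_centralized S (F : hom_type) P :=
  forall P' : {group gT}, P' \subset S -> Fconj F P P' -> #|'C_S(P')| <= #|'C_S(P)|.

Definition fully_normalized S (F : hom_type) P :=
  forall P' : {group gT}, P' \subset S -> Fconj F P P' -> #|'N_S(P')| <= #|'N_S(P)|.

(* automorphisms of P, viewed as permutations of gT (identity off P) *)
Definition toperm P f : {perm gT} :=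
  insubd (1 : {perm gT}) [ffun x => if x \in P then f x else x].

Definition AutF (F : hom_type) P : {set {perm gT}} := [set toperm P f | f in F P P].
Definition AutS S P : {set {perm gT}} := [set toperm P f | f in HomS S P P].

(* N_phi = { g in N_S(P) : phi c_g phi^-1 in Aut_S(phi(P)) } *)
Definition Nphi S P f : {set gT} :=
  [set g in 'N_S(P) | [exists h in S, [forall x in P, f (x ^ g^-1) == (f x) ^ h^-1]]].

Definition saturated (p : nat) S (F : hom_type) :=
  fusion_system S F /\
  (forall P : {group gT}, P \subset S -> fully_normalized S F P ->
     fully_centralized S F P /\ p.-Sylow(AutF F P) (AutS S P)) /\
  (forall P : {group gT}, P \subset S -> forall f, f \in F P S ->
     fully_centralized S F (f @: P) ->
     exists2 g, g \in F (Nphi S P f) S & {in P, forall x, g x = f x}).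

Definition centric S (F : hom_type) P :=
  forall P' : {group gT}, P' \subset S -> Fconj F P P' -> 'C_S(P') \subset P'.

Definition cobj S (F : hom_type) (P : {group gT}) := P \subset S /\ centric S F P.

Record linking_system S (F : hom_type) := LinkingSystem {
  Mor : {set gT} -> {set gT} -> Type;
  comp : forall P Q R, Mor Q R -> Mor P Q -> Mor P R;
  idm : forall P, Mor P P;
  proj : forall P Q, Mor P Q -> {ffun gT -> gT};
  delta : forall P, gT -> Mor P P;
  comp_assoc : forall P Q R T : {group gT}, cobj S F P -> cobj S F Q -> cobj S F R ->
    cobj S F T -> forall (f : Mor P Q) (g : Mor Q R) (h : Mor R T),
    comp h (comp g f) = comp (comp h g) f;
  comp_id_l : forall P Q : {group gT}, cobj S F P -> cobj S F Q ->
    forall f : Mor P Q, comp (idm Q) f = f;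
  comp_id_r : forall P Q : {group gT}, cobj S F P -> cobj S F Q ->
    forall f : Mor P Q, comp f (idm P) = f;
  proj_hom : forall P Q : {group gT}, cobj S F P -> cobj S F Q ->
    forall f : Mor P Q, proj f \in F P Q;
  proj_comp : forall P Q R : {group gT}, cobj S F P -> cobj S F Q -> cobj S F R ->
    forall (f : Mor P Q) (g : Mor Q R),
    proj (comp g f) = res P (fun x => proj g (proj f x));
  proj_id : forall P : {group gT}, cobj S F P -> proj (idm P) = res P id;
  delta1 : forall P : {group gT}, cobj S F P -> delta P 1 = idm P;
  deltaM : forall P : {group gT}, cobj S F P ->
    {in P &, forall x y, delta P (x * y) = comp (delta P x) (delta P y)};
  delta_inj : forall P : {group gT}, cobj S F P -> {in P &, injective (delta P)};
  axA_free : forall P Q : {group gT}, cobj S F P -> cobj S F Q ->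
    forall (f : Mor P Q) z, z \in 'Z(P) -> comp f (delta P z) = f -> z = 1;
  axA_fibres : forall P Q : {group gT}, cobj S F P -> cobj S F Q ->
    forall f g : Mor P Q,
    proj f = proj g <-> exists2 z, z \in 'Z(P) & g = comp f (delta P z);
  axA_surj : forall P Q : {group gT}, cobj S F P -> cobj S F Q ->
    forall h, h \in F P Q -> exists f : Mor P Q, proj f = h;
  axB : forall P : {group gT}, cobj S F P ->
    forall g, g \in P -> proj (delta P g) = res P (fun x => x ^ g^-1);
  axC : forall P Q : {group gT}, cobj S F P -> cobj S F Q ->
    forall (f : Mor P Q) g, g \in P ->
    comp f (delta P g) = comp (delta Q (proj f g)) f
}.

Definition NF (F : hom_type) Q : hom_type := fun P P' =>
  [set f in F P P' | [exists psi in F (P * Q) (P' * Q),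
      [forall x in P, psi x == f x] && (psi @: Q \subset Q)]].

Definition weakly_closed S (F : hom_type) (A : {set gT}) :=
  forall Q : {group gT}, Q \subset S -> Fconj F A Q -> Q :=: A.

Definition Foc T (F : hom_type) : {set gT} :=
  << \bigcup_(P : {group gT} | P \subset T) [set x^-1 * (f : {ffun gT -> gT}) x | f in F P P, x in P] >>.

End Fusion.

(* Main.v *)
Require Import Defs.
From mathcomp Require Import all_boot all_fingroup all_solvable.
From Stdlib Require Import Classical.
From mathcomp Require Import zify.
Import GroupScope.
Set Implicit Arguments. Unset Strict Implicit. Unset Printing Implicit Defensive.

Lemma InjP (gT : finGroupType) (P Q : {set gT}) (f : {ffun gT -> gT}) :
  f \in Inj P Q ->
  [/\ forall x, x \notin P -> f x = 1,
      {in P &, forall x y, f (x * y) = f x * f y},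
      {in P &, injective f} & f @: P \subset Q].
Proof.
rewrite inE => /and4P [/forallP h1 /forall_inP h2 /forall_inP h3 h4]; split => //.
- by move=> x xP; apply/eqP; apply: (implyP (h1 x)); rewrite xP.
- by move=> x y xP yP; apply/eqP; exact: (forall_inP (h2 x xP) y yP).
- by move=> x y xP yP e; apply/eqP; exact: (implyP (forall_inP (h3 x xP) y yP)) (introT eqP e).
Qed.

Lemma hom1 (gT : finGroupType) (P : {group gT}) (f : gT -> gT) :
  {in P &, forall x y, f (x * y) = f x * f y} -> f 1 = 1.
Proof. move=> h; have := h 1 1 (group1 P) (group1 P); rewrite mulg1.
by move/(congr1 (mulg (f 1)^-1)); rewrite mulVg mulKg. Qed.

Lemma homV (gT : finGroupType) (P : {group gT}) (f : gT -> gT) :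
  {in P &, forall x y, f (x * y) = f x * f y} -> {in P, forall x, f x^-1 = (f x)^-1}.
Proof. move=> h x xP; have := h x x^-1 xP (groupVr xP); rewrite mulgV (hom1 h).
by move/esym/(congr1 (mulg (f x)^-1)); rewrite mulKg mulg1. Qed.

Lemma img_group_set (gT : finGroupType) (P : {group gT}) Q (f : {ffun gT -> gT}) :
  f \in Inj P Q -> group_set (f @: P).
Proof.
case/InjP=> _ hM _ _; apply/group_setP; split.
  by apply/imsetP; exists 1 => //; rewrite (hom1 hM).
move=> _ _ /imsetP[x xP ->] /imsetP[y yP ->]; rewrite -hM //.
by apply/imsetP; exists (x * y) => //; rewrite groupM.
Qed.


Lemma resE (gT : finGroupType) (P : {set gT}) h x : res P h x = if x \in P then h x else 1.
Proof. by rewrite /res ffunE. Qed.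

Lemma F_inj (gT : finGroupType) (S : {group gT}) F (P Q : {group gT}) f :
  fusion_system S F -> P \subset S -> Q \subset S -> f \in F P Q -> f \in Inj P Q.
Proof. by case=> a1 _ _ sP sQ; case: (a1 P Q sP sQ) => _ /subsetP; apply. Qed.

Lemma resid_F (gT : finGroupType) (S : {group gT}) F (P Q : {group gT}) :
  fusion_system S F -> P \subset Q -> Q \subset S -> res P id \in F P Q.
Proof.
case=> a1 _ _ sPQ sQ; have sP := subset_trans sPQ sQ.
case: (a1 P Q sP sQ) => /subsetP h _; apply: h.
apply/imsetP; exists 1; first by rewrite !inE group1 invg1 conjsg1.
by apply/ffunP=> x; rewrite !resE invg1 conjg1.
Qed.

Lemma widen_F (gT : finGroupType) (S : {group gT}) F (P Q R : {group gT}) f :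
  fusion_system S F -> P \subset S -> Q \subset R -> R \subset S ->
  f \in F P Q -> f \in F P R.
Proof.
move=> fs sP sQR sR fF; have sQ := subset_trans sQR sR.
case/InjP: (F_inj fs sP sQ fF) => f1 _ _ /subsetP fPQ.
have h := (let: And3 _ a2 _ := fs in a2) P Q R sP sQ sR f _ fF (resid_F fs sQR sR).
suff E : res P (fun x => res Q id (f x)) = f by rewrite E in h.
apply/ffunP=> x; rewrite !resE.
by case: ifP => xP; [rewrite fPQ //; apply: imset_f | rewrite f1 // xP].
Qed.

Lemma restr_F (gT : finGroupType) (S : {group gT}) F (P Q R : {group gT}) f :
  fusion_system S F -> P \subset Q -> Q \subset S -> R \subset S ->
  f \in F Q R -> res P f \in F P R.
Proof.
move=> fs sPQ sQ sR fF; have sP := subset_trans sPQ sQ.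
have h := (let: And3 _ a2 _ := fs in a2) P Q R sP sQ sR _ f (resid_F fs sPQ sQ) fF.
suff E : res P (fun x => f (res P id x)) = res P f by rewrite E in h.
by apply/ffunP=> x; rewrite !resE; case: ifP => // xP; rewrite xP.
Qed.

Lemma iso_F (gT : finGroupType) (S : {group gT}) F (P Q : {group gT}) f :
  fusion_system S F -> P \subset S -> Q \subset S -> f \in F P Q -> Fiso F P (f @: P) f.
Proof. by case=> a1 _ a3 sP sQ fF; apply: (a3 P _ sP sQ). Qed.

Lemma shrink_F (gT : finGroupType) (S : {group gT}) F (P Q R : {group gT}) f :
  fusion_system S F -> P \subset S -> Q \subset S -> R \subset S ->
  f \in F P R -> f @: P \subset Q -> f \in F P Q.
Proof.
move=> fs sP sQ sR fF sfQ.
have gs := img_group_set (F_inj fs sP sR fF).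
case: (iso_F fs sP sR fF) => fF' _.
have sfR : f @: P \subset R by case/InjP: (F_inj fs sP sR fF).
exact: (widen_F (S := S) (Q := Group gs) fs sP sfQ sQ fF').
Qed.


Lemma Fconj_refl (gT : finGroupType) (S : {group gT}) F (P : {group gT}) :
  fusion_system S F -> P \subset S -> Fconj F P P.
Proof.
move=> fs sP; exists (res P id); split; first exact: resid_F fs (subxx P) sP.
by exists (res P id); [exact: resid_F fs (subxx P) sP | split=> x xP; rewrite !resE xP /= xP].
Qed.

Lemma Fconj_trans (gT : finGroupType) (S : {group gT}) F (P Q R : {group gT}) :
  fusion_system S F -> P \subset S -> Q \subset S -> R \subset S ->
  Fconj F P Q -> Fconj F Q R -> Fconj F P R.
Proof.
move=> fs sP sQ sR [f [fF [f' f'F [ff' f'f]]]] [g [gF [g' g'F [gg' g'g]]]].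
have a2 := let: And3 _ a2 _ := fs in a2.
case/InjP: (F_inj fs sP sQ fF) => _ _ _ /subsetP fPQ.
case/InjP: (F_inj fs sR sQ g'F) => _ _ _ /subsetP gRQ.
exists (res P (fun x => g (f x))); split; first exact: (a2 P Q R sP sQ sR f g fF gF).
exists (res R (fun x => f' (g' x))); first exact: (a2 R Q P sR sQ sP g' f' g'F f'F).
split=> x xP.
  have fx : f x \in Q by apply: fPQ; apply: imset_f.
  rewrite !resE xP.
  case/InjP: (F_inj fs sQ sR gF) => _ _ _ /subsetP gQR.
  have gx : g (f x) \in R by apply: gQR; apply: imset_f.
  by rewrite gx gg' // ff'.
have gx : g' x \in Q by apply: gRQ; apply: imset_f.
case/InjP: (F_inj fs sQ sP f'F) => _ _ _ /subsetP fQP.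
have fx : f' (g' x) \in P by apply: fQP; apply: imset_f.
by rewrite !resE xP fx f'f // g'g.
Qed.

Lemma Fiso_img (gT : finGroupType) (S : {group gT}) F (P Q : {group gT}) f :
  fusion_system S F -> P \subset S -> Q \subset S -> Fiso F P Q f -> f @: P = Q.
Proof.
move=> fs sP sQ [fF [g gF [_ fg]]].
case/InjP: (F_inj fs sP sQ fF) => _ _ _ sfQ.
case/InjP: (F_inj fs sQ sP gF) => _ _ _ /subsetP gQP.
apply/eqP; rewrite eqEsubset sfQ; apply/subsetP=> y yQ.
by rewrite -(fg y yQ); apply: imset_f; apply: gQP; apply: imset_f.
Qed.

Lemma exists_fc (gT : finGroupType) (S : {group gT}) F (P : {group gT}) :
  fusion_system S F -> P \subset S ->
  exists2 P' : {group gT}, P' \subset S & Fconj F P P' /\ fully_centralized S F P'.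
Proof.
move=> fs sP.
suff H : forall n (Q : {group gT}), #|S| - #|'C_S(Q)| <= n -> Q \subset S -> Fconj F P Q ->
  exists2 P' : {group gT}, P' \subset S & Fconj F P P' /\ fully_centralized S F P'.
  exact: (H _ P (leqnn _) sP (Fconj_refl fs sP)).
elim=> [|n IH] Q hn sQ cPQ.
  exists Q => //; split=> // P' sP' _.
  have: #|S| <= #|'C_S(Q)| by rewrite -subn_eq0 -leqn0.
  move=> h; apply: leq_trans h; exact: subset_leq_card (subsetIl _ _).
case: (classic (fully_centralized S F Q)) => fcQ; first by exists Q.
have [P' [sP' [cQP' lt]]] : exists P' : {group gT}, P' \subset S /\ Fconj F Q P' /\
   #|'C_S(Q)| < #|'C_S(P')|.
  apply: NNPP => nE; apply: fcQ => P' sP' cQP'; rewrite leqNgt; apply/negP => lt.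
  by apply: nE; exists P'.
apply: (IH P') => //; last exact: (Fconj_trans fs sP sQ sP' cPQ cQP').
have: #|'C_S(P')| <= #|S| by exact: subset_leq_card (subsetIl _ _).
move: hn lt; lia.
Qed.


Lemma ZS_C (gT : finGroupType) (S A : {group gT}) : A \subset 'Z(S) -> A \subset 'C(S).
Proof. by move=> h; apply: subset_trans h (subsetIr _ _). Qed.

Lemma ZS_S (gT : finGroupType) (S A : {group gT}) : A \subset 'Z(S) -> A \subset S.
Proof. by move=> h; apply: subset_trans h (subsetIl _ _). Qed.

Lemma conj_central (gT : finGroupType) (S A : {group gT}) a x :
  A \subset 'Z(S) -> a \in A -> x \in S -> x ^ a^-1 = x.
Proof.
move=> hA aA xS; have /centP c : a \in 'C(S) by apply: (subsetP (ZS_C hA)).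
by rewrite conjgE invgK mulgA (c x xS) mulgK.
Qed.

Lemma Nphi_group (gT : finGroupType) (S P : {group gT}) Q (f : {ffun gT -> gT}) :
  f \in Inj P Q -> group_set (Nphi S P f).
Proof.
case/InjP=> _ hM _ _; apply/group_setP; split.
  rewrite /Nphi in_set group1 /=; apply/exists_inP; exists 1; first exact: group1.
  by apply/forall_inP=> x xP; rewrite !invg1 !conjg1.
move=> g1 g2 hg1 hg2; move: hg1 hg2; rewrite /Nphi !inE.
move=> /andP[/andP[g1S g1N] /exists_inP[h1 h1S /forall_inP e1]].
move=> /andP[/andP[g2S g2N] /exists_inP[h2 h2S /forall_inP e2]].
have g12N : g1 * g2 \in 'N(P) by rewrite groupM // inE.
move: g12N; rewrite inE => ->; rewrite groupM //=.
apply/exists_inP; exists (h1 * h2); first by rewrite groupM.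
apply/forall_inP=> x xP; rewrite !invMg !conjgM.
have g2N' : g2^-1 \in 'N(P) by rewrite groupV inE.
have xg : x ^ g2^-1 \in P by rewrite memJ_norm.
by rewrite (eqP (e1 _ xg)) (eqP (e2 _ xP)).
Qed.


Lemma key (gT : finGroupType) p (S A P : {group gT}) F (f : {ffun gT -> gT}) :
  saturated p S F -> A \subset 'Z(S) -> weakly_closed S F A ->
  P \subset S -> f \in F P S -> fully_centralized S F (f @: P) ->
  exists psi, [/\ psi \in F (P <*> A) S, {in P, psi =1 f} & psi @: A = A].
Proof.
move=> [fs [_ sat2]] hA wc sP fF fc.
have sS := subxx S; have sA := ZS_S hA.
have fI := F_inj fs sP sS fF.
case/InjP: (fI) => _ hM _ /subsetP fPS.
have gN := Nphi_group S fI; pose NG := Group gN.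
have sNG : NG \subset S by apply/subsetP=> g; rewrite /= /Nphi !inE => /andP[/andP[]].
have sPN : P \subset NG.
  apply/subsetP=> x xP; rewrite /= /Nphi !inE (subsetP sP _ xP) /=.
  have xN : x \in 'N(P) by rewrite (subsetP (normG P)).
  move: xN; rewrite inE => -> /=.
  have fxS : f x \in S by apply: fPS; apply: imset_f.
  apply/exists_inP; exists (f x) => //; apply/forall_inP=> y yP.
  by rewrite !conjgE !invgK hM ?groupM ?groupV // hM ?groupV // (homV hM).
have sAN : A \subset NG.
  apply/subsetP=> a aA; rewrite /= /Nphi !inE (subsetP sA _ aA) /=.
  have aN : a \in 'N(P).
    apply: (subsetP (cent_sub P)); apply: (subsetP (centS sP)).
    exact: (subsetP (ZS_C hA)).
  move: aN; rewrite inE => -> /=.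
  apply/exists_inP; exists 1 => //; apply/forall_inP=> z zP.
  by rewrite invg1 conjg1 (conj_central hA aA (subsetP sP _ zP)).
have sPAN : P <*> A \subset NG by rewrite join_subG sPN sAN.
have sPA : P <*> A \subset S := subset_trans sPAN sNG.
have [psi0 psi0F psi0f] := sat2 P sP f fF fc.
have psiF : res (P <*> A) psi0 \in F (P <*> A) S := restr_F fs sPAN sNG sS psi0F.
have rhoF : res A (res (P <*> A) psi0) \in F A S := restr_F fs (joing_subr P A) sPA sS psiF.
have [rhoF' [g gF _]] := iso_F fs sA sS rhoF.
have rI := F_inj fs sA sS rhoF.
pose G := Group (img_group_set rI).
have sG : G \subset S by case/InjP: (rI).
have eG : G :=: A.
  apply: wc => //; exists (res A (res (P <*> A) psi0)); exact: iso_F fs sA sS rhoF.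
exists (res (P <*> A) psi0); split => //.
  by move=> x xP; rewrite resE (subsetP (joing_subl P A) _ xP) psi0f.
rewrite -[RHS]eG /=; apply: eq_in_imset => a aA; by rewrite [in RHS]resE aA.
Qed.


Lemma inj_img (gT : finGroupType) (P : {set gT}) (f : {ffun gT -> gT}) :
  f \in Inj P P -> f @: P = P.
Proof. case/InjP=> _ _ fi sub; apply/eqP; rewrite eqEcard sub /=. rewrite (card_in_imset fi). exact: leqnn. Qed.

Lemma joinA_E (gT : finGroupType) (S A P : {group gT}) :
  A \subset 'Z(S) -> P \subset S -> P <*> A = P * A.
Proof.
move=> hA sP; apply: comm_joingE; apply: centC.
by apply: subset_trans sP _; rewrite centsC; exact: ZS_C hA.
Qed.

Lemma mainNF (gT : finGroupType) p (S A P : {group gT}) F (f : {ffun gT -> gT}) :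
  saturated p S F -> A \subset 'Z(S) -> weakly_closed S F A ->
  P \subset S -> f \in F P P -> f \in NF F A P P.
Proof.
move=> sat hA wc sP fF.
have fs : fusion_system S F by case: sat.
have a2 := let: And3 _ a2 _ := fs in a2.
have sS := subxx S; have sA := ZS_S hA.
have [P' sP' [[chi chiI] fcP']] := exists_fc fs sP.
have eP' : chi @: P = P' := Fiso_img fs sP sP' chiI.
case: (chiI) => chiF [chi' chi'F [chi'chi chichi']].
have chiS : chi \in F P S := widen_F fs sP sP' sS chiF.
have fc1 : fully_centralized S F (chi @: P) by rewrite eP'.
have [psi [psiF psichi psiA]] := key sat hA wc sP chiS fc1.
have h1F : res P' (fun y => f (chi' y)) \in F P' P := a2 P' P P sP' sP sP _ _ chi'F fF.
pose g := res P' (fun y => chi (res P' (fun y => f (chi' y)) y)).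
have gF : g \in F P' P' := a2 P' P P' sP' sP sP' _ _ h1F chiF.
have eg : g @: P' = P' := inj_img (F_inj fs sP' sP' gF).
have gS : g \in F P' S := widen_F fs sP' sP' sS gF.
have fc2 : fully_centralized S F (g @: P') by rewrite eg.
have [gam [gamF gamg gamA]] := key sat hA wc sP' gS fc2.
have ePA := joinA_E hA sP; have eP'A := joinA_E hA sP'.
have sPA : P <*> A \subset S by rewrite join_subG sP sA.
have sP'A : P' <*> A \subset S by rewrite join_subG sP' sA.
case/InjP: (F_inj fs sPA sS psiF) => _ psiM _ _.
case/InjP: (F_inj fs sP'A sS gamF) => _ gamM _ _.
have inPA x : x \in P -> x \in P <*> A := fun h => subsetP (joing_subl P A) x h.
have inAPA a : a \in A -> a \in P <*> A := fun h => subsetP (joing_subr P A) a h.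
have inP'A x : x \in P' -> x \in P' <*> A := fun h => subsetP (joing_subl P' A) x h.
have inAP'A a : a \in A -> a \in P' <*> A := fun h => subsetP (joing_subr P' A) a h.
have ePsi : psi @: (P <*> A) = P' <*> A.
  apply/setP=> z; rewrite eP'A; apply/imsetP/idP.
    case=> w; rewrite ePA => /mulsgP[x a xP aA ->] ->.
    rewrite (psiM x a (inPA x xP) (inAPA a aA)) psichi //; apply: mem_mulg.
      by rewrite -eP'; exact: imset_f.
    by rewrite -psiA; exact: imset_f.
  case/mulsgP=> y b yP' bA ->; rewrite -eP' in yP'; rewrite -psiA in bA.
  case/imsetP: yP' => x xP ->; case/imsetP: bA => a aA ->.
  exists (x * a); first exact: groupM (inPA x xP) (inAPA a aA).
  by rewrite -psichi //; symmetry; exact: (psiM x a (inPA x xP) (inAPA a aA)).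
have psiPA : psi \in F (P <*> A) (P' <*> A).
  by apply: (shrink_F fs sPA sP'A sS psiF); rewrite ePsi.
have [_ [th thF [thpsi _]]] := iso_F fs sPA sP'A psiPA.
rewrite ePsi in thF.
have sgam : gam @: (P' <*> A) \subset P' <*> A.
  apply/subsetP=> _ /imsetP[z zPA ->]; move: zPA; rewrite eP'A => /mulsgP[y b yP bA ->].
  have ->: gam (y * b) = g y * gam b.
    by rewrite -gamg //; exact: (gamM y b (inP'A y yP) (inAP'A b bA)).
  apply: mem_mulg; first by rewrite -eg; exact: imset_f.
  by rewrite -gamA; exact: imset_f.
have gamPA : gam \in F (P' <*> A) (P' <*> A) := shrink_F fs sP'A sP'A sS gamF sgam.
have Phi1F := a2 _ _ _ sPA sP'A sP'A psi gam psiPA gamPA.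
have PhiF := a2 _ _ _ sPA sP'A sPA _ th Phi1F thF.
case/InjP: (F_inj fs sP sP fF) => _ _ _ /subsetP fPP.
rewrite /NF inE fF /=; apply/exists_inP; exists (res (P <*> A) (fun x => th (res (P <*> A) (fun x => gam (psi x)) x))).
  by rewrite -ePA.
apply/andP; split.
  apply/forall_inP=> x xP; rewrite !resE (inPA x xP) psichi // gamg; last first.
    by rewrite -eP'; exact: imset_f.
  have chiP' : chi x \in P' by rewrite -eP'; exact: imset_f.
  have fxP : f x \in P by apply: fPP; exact: imset_f.
  rewrite /g !resE chiP' chi'chi // -psichi // thpsi //; exact: inPA.
apply/subsetP=> _ /imsetP[a aA ->]; rewrite !resE (inAPA a aA).
have b : psi a \in A by rewrite -psiA; exact: imset_f.
have c : gam (psi a) \in A by rewrite -gamA; exact: imset_f.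
rewrite -psiA in c; case/imsetP: c => a' a'A ->.
by rewrite thpsi ?inAPA.
Qed.


Theorem proposition4p7 (gT : finGroupType) (p : nat) (S A : {group gT})
    (F : hom_type gT) (L : linking_system S F) :
  prime p -> p.-group S -> saturated p S F ->
  A \subset 'Z(S) -> weakly_closed S F A ->
  Foc S F = Foc 'N_S(A) (NF F A).
Proof.
move=> pr pS sat hA wc.
have sSN : S \subset 'N(A) by apply: cents_norm; rewrite centsC; exact: ZS_C hA.
rewrite /Foc; apply/eqP; rewrite eqEsubset !gen_subG; apply/andP; split.
  apply/bigcupsP => P sP; apply/subsetP => _ /imset2P[f x fF xP ->].
  apply: mem_gen; apply/bigcupP; exists P; first by rewrite subsetI sP (subset_trans sP sSN).
  by apply: imset2_f => //; exact: mainNF sat hA wc sP fF.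
apply/bigcupsP => P sP; apply/subsetP => _ /imset2P[f x fF xP ->].
apply: mem_gen; apply/bigcupP; exists P; first exact: subset_trans sP (subsetIl _ _).
by apply: imset2_f => //; move: fF; rewrite /NF inE => /andP[].
Qed.
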